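(* Let $M=(S,\mathrm{Act},P)$ be an MDP, $T\subseteq S$, $\mathrm{rew}\colon S\to\mathbb{R}_{\ge0}$. Let $(x,r,\sigma)$ with $x\in[0,\infty]^S$, $r\in\mathbb{N}_\infty^S$, and $\sigma$ a strategy satisfy: (1) $D^{\sigma}(r)\le r$; (2) $E^{\sigma}(x)\le x$; (3) for all $s\in S$, $x(s)<\infty$ implies $r(s)<\infty$ (inequalities pointwise). Then for all $s\in S$: $\mathbb{E}^{\min}_s(\Diamond T)\le\mathbb{E}^{\sigma}_s(\Diamond T)\le x(s)$.
   Context: An MDP is a tuple $M=(S,\mathrm{Act},P)$ with $S$ finite, $\mathrm{Act}$ finite, $P\colon S\times\mathrm{Act}\times S\to[0,1]$ with $\sum_{s'}P(s,a,s')\in\{0,1\}$; $\mathrm{Act}(s)=\{a\mid\sum_{s'}P(s,a,s')=1\}$ is nonempty for all $s$; $\mathrm{Post}(s,a)=\{s'\mid P(s,a,s')>0\}$. A strategy is $\sigma\colon S\to\mathrm{Act}$ with $\sigma(s)\in\mathrm{Act}(s)$, inducing a Markov chain with transitions $P(s,\sigma(s),\cdot)$. For an infinite path $s_0s_1\ldots$, the accumulated reward is $\sum_{k=0}^{n-1}\mathrm{rew}(s_k)$ with $n=\min\{i\mid s_i\in T\}$ if $T$ is visited, and $\infty$ otherwise; $\mathbb{E}^\sigma_s(\Diamond T)$ is its expectation under $\sigma$ from $s$, and $\mathbb{E}^{\min}_s(\Diamond T)=\min_\sigma\mathbb{E}^\sigma_s(\Diamond T)$. $E^{\sigma}(x)(s)=0$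 for $s\in T$ and $\mathrm{rew}(s)+\sum_{s'\in\mathrm{Post}(s,\sigma(s))}P(s,\sigma(s),s')x(s')$ for $s\notin T$, with $p\cdot\infty=\infty$ for $p>0$, $a+\infty=\infty$. $\mathbb{N}_\infty=\mathbb{N}\cup\{\infty\}$, $1+\infty=\infty$; $D^{\sigma}(r)(s)=0$ for $s\in T$ and $1+\min_{s'\in\mathrm{Post}(s,\sigma(s))}r(s')$ for $s\notin T$. *)

(* Defs.v *)
From HB Require Import structures.
From mathcomp Require Import all_boot all_order all_algebra.
From mathcomp Require Import boolp classical_sets reals ereal sequences.
Set Implicit Arguments. Unset Strict Implicit. Unset Printing Implicit Defensive.
Import Order.TTheory GRing.Theory Num.Theory.
Local Open Scope ring_scope.
Local Open Scope classical_set_scope.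

Definition is_MDP (R : realType) (S A : finType) (P : S -> A -> S -> R) : Prop :=
  [/\ (forall s a s', 0 <= P s a s' <= 1),
      (forall s a, \sum_(s' : S) P s a s' = 0 \/ \sum_(s' : S) P s a s' = 1)
    & (forall s, exists a, \sum_(s' : S) P s a s' = 1)].

Definition enabled (R : realType) (S A : finType) (P : S -> A -> S -> R)
  (s : S) (a : A) : bool := \sum_(s' : S) P s a s' == 1.

Definition is_strategy (R : realType) (S A : finType) (P : S -> A -> S -> R)
  (sigma : S -> A) : Prop := forall s, enabled P s (sigma s).

Fixpoint path_prob (R : realType) (S A : finType) (P : S -> A -> S -> R)
  (sigma : S -> A) (x : S) (p : seq S) : R :=
  match p with
  | [::] => 1
  | y :: p' => P x (sigma x) y * path_prob P sigma y p'
  end.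

Definition avoids (S : finType) (T : {set S}) (p : seq S) : bool :=
  all (fun t => t \notin T) p.

Definition first_hit (S : finType) (T : {set S}) (s : S) (t : seq S) : bool :=
  avoids T (belast s t) && (last s t \in T).

Definition reach_prob (R : realType) (S A : finType) (P : S -> A -> S -> R)
  (sigma : S -> A) (T : {set S}) (s : S) : \bar R :=
  (\sum_(0 <= n <oo)
     (\sum_(t : n.-tuple S | first_hit T s t) path_prob P sigma s t)%:E)%E.

Definition step_reward (R : realType) (S A : finType) (P : S -> A -> S -> R)
  (sigma : S -> A) (T : {set S}) (rew : S -> R) (s : S) (n : nat) : R :=
  \sum_(t : n.-tuple S | avoids T (s :: t)) path_prob P sigma s t * rew (last s t).

(* If T is missed with positive probability the accumulated reward is
   infinite on a set of positive measure, hence the expectation is +oo;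
   otherwise (monotone convergence) it is the sum over n of the expected
   reward collected at step n before reaching T. *)
Definition exp_reward (R : realType) (S A : finType) (P : S -> A -> S -> R)
  (sigma : S -> A) (T : {set S}) (rew : S -> R) (s : S) : \bar R :=
  if reach_prob P sigma T s == 1%E
  then (\sum_(0 <= n <oo) (step_reward P sigma T rew s n)%:E)%E
  else (+oo)%E.

Definition exp_reward_min (R : realType) (S A : finType) (P : S -> A -> S -> R)
  (T : {set S}) (rew : S -> R) (s : S) : \bar R :=
  ereal_inf [set exp_reward P sigma T rew s | sigma in [set sigma | is_strategy P sigma]].

Definition Eop (R : realType) (S A : finType) (P : S -> A -> S -> R)
  (sigma : S -> A) (T : {set S}) (rew : S -> R) (x : S -> \bar R) (s : S) : \bar R :=
  if s \in T then 0%E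
  else ((rew s)%:E + \sum_(s' | P s (sigma s) s' != 0%R) (P s (sigma s) s')%:E * x s')%E.

(* N_oo = option nat, None = oo *)
Definition ninf := option nat.
Definition ninf_le (a b : ninf) : bool :=
  match a, b with
  | _, None => true
  | None, Some _ => false
  | Some m, Some n => (m <= n)%N
  end.
Definition ninf_min (a b : ninf) : ninf :=
  match a, b with
  | None, b => b
  | a, None => a
  | Some m, Some n => Some (minn m n)
  end.
Definition ninf_succ (a : ninf) : ninf := omap succn a.

Definition Dop (R : realType) (S A : finType) (P : S -> A -> S -> R)
  (sigma : S -> A) (T : {set S}) (r : S -> ninf) (s : S) : ninf :=
  if s \in T then Some 0%N
  else ninf_succ (\big[ninf_min/None]_(s' | P s (sigma s) s' != 0%R) r s').

(* Main.v *)
Require Import Defs.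
From mathcomp Require Import all_boot all_order all_algebra.
From mathcomp Require Import boolp classical_sets reals ereal sequences topology normedtype.
From mathcomp Require Import lra.
Import Order.TTheory GRing.Theory Num.Theory.
Import numFieldNormedType.Exports.
Local Open Scope ring_scope.
Local Open Scope classical_set_scope.

Lemma geo_cvg0 (R : realType) (u : nat -> R) (N : nat) (q : R) : 0 <= q < 1 ->
  (forall n, 0 <= u n) -> (forall n, u n.+1 <= u n) ->
  (forall j, u (j * N)%N <= q ^+ j) -> u n @[n --> \oo] --> 0.
Proof.
move=> /andP[q0 q1] u0 um Hj.
have hq : `|q| < 1 by rewrite ger0_norm.
apply/cvgr0Pnorm_lt => eps eps0.
have := (cvgr0Pnorm_lt _).1 (cvg_expr hq) eps eps0.
move=> [J _ HJ].
exists (J * N)%N => // n /= Jn.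
have mono : forall k, u (J * N + k)%N <= u (J * N)%N.
  by elim=> [|k IH]; rewrite ?addn0 // addnS; apply: le_trans (um _) IH.
rewrite ger0_norm // -(subnKC Jn); apply: le_lt_trans (mono _) _.
apply: le_lt_trans (Hj J) _.
have := HJ J (leqnn J); rewrite /= ger0_norm //; exact: exprn_ge0.
Qed.

Section Aux.
Variables (R : realType) (S A : finType) (P : S -> A -> S -> R) (T : {set S})
  (rew : S -> R) (sigma : S -> A).
Hypothesis P01 : forall s a s', 0 <= P s a s' <= 1.
Hypothesis Psum : forall s, \sum_(s' : S) P s (sigma s) s' = 1.

Lemma big_tuple_cons (n : nat) (G : seq S -> R) :
  \sum_(t : n.+1.-tuple S) G t = \sum_(a : S) \sum_(t : n.-tuple S) G (a :: t).
Proof.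
rewrite pair_big /=.
rewrite (reindex (fun p : S * n.-tuple S => [tuple of p.1 :: p.2])) /=.
  by apply: eq_bigr => -[a t].
exists (fun t : n.+1.-tuple S => (thead t, [tuple of behead t])).
  move=> [a t] _ /=; rewrite theadE; congr pair; exact: val_inj.
move=> t _ /=; by rewrite [in RHS](tuple_eta t).
Qed.

Lemma big_tuple0 (G : seq S -> R) : \sum_(t : 0.-tuple S) G t = G [::].
Proof.
rewrite (big_pred1 [tuple]) // => t /=; apply/esym/eqP; exact: tuple0.
Qed.

Fixpoint av (n : nat) (s : S) : R :=
  if s \in T then 0 else
  match n with 0 => 1 | n'.+1 => \sum_(s' : S) P s (sigma s) s' * av n' s' end.
Fixpoint ht (n : nat) (s : S) : R :=
  match n with 0 => (s \in T)%:R
  | n'.+1 => if s \in T then 0 else \sum_(s' : S) P s (sigma s) s' * ht n' s' end.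
Fixpoint st (n : nat) (s : S) : R :=
  if s \in T then 0 else
  match n with 0 => rew s | n'.+1 => \sum_(s' : S) P s (sigma s) s' * st n' s' end.

Lemma av_eq n s :
  \sum_(t : n.-tuple S | avoids T (s :: t)) path_prob P sigma s t = av n s.
Proof.
elim: n s => [|n IH] s; rewrite big_mkcond.
  rewrite (big_tuple0 (fun t => if avoids T (s :: t) then path_prob P sigma s t else 0)) /=.
  by rewrite andbT; case: (s \in T).
rewrite (big_tuple_cons _ (fun t => if avoids T (s :: t) then path_prob P sigma s t else 0)) /=.
case: (s \in T) => /=.
  by rewrite big1 // => a _; rewrite big1.
apply: eq_bigr => a _; rewrite -IH [in RHS]big_mkcond mulr_sumr; apply: eq_bigr => t _ /=.
by case: ifP; rewrite ?mulr0.
Qed.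

Lemma ht_eq n s :
  \sum_(t : n.-tuple S | first_hit T s t) path_prob P sigma s t = ht n s.
Proof.
elim: n s => [|n IH] s; rewrite big_mkcond.
  rewrite (big_tuple0 (fun t => if first_hit T s t then path_prob P sigma s t else 0)) /=.
  by rewrite /first_hit /=; case: (s \in T).
rewrite (big_tuple_cons _ (fun t => if first_hit T s t then path_prob P sigma s t else 0)) /=.
rewrite /first_hit /=; case: (s \in T) => /=.
  by rewrite big1 // => a _; rewrite big1.
apply: eq_bigr => a _; rewrite -IH [in RHS]big_mkcond mulr_sumr; apply: eq_bigr => t _ /=.
by rewrite /first_hit; case: ifP; rewrite ?mulr0.
Qed.

Lemma st_eq n s : step_reward P sigma T rew s n = st n s.
Proof.
rewrite /step_reward.
elim: n s => [|n IH] s; rewrite big_mkcond.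
  rewrite (big_tuple0 (fun t => if avoids T (s :: t) then path_prob P sigma s t * rew (last s t) else 0)) /=.
  by rewrite andbT mul1r; case: (s \in T).
rewrite (big_tuple_cons _ (fun t => if avoids T (s :: t) then path_prob P sigma s t * rew (last s t) else 0)) /=.
case: (s \in T) => /=.
  by rewrite big1 // => a _; rewrite big1.
apply: eq_bigr => a _; rewrite -IH [in RHS]big_mkcond mulr_sumr; apply: eq_bigr => t _ /=.
by case: ifP; rewrite ?mulr0 ?mulrA.
Qed.


Hypothesis rew0 : forall s, 0 <= rew s.

Lemma P0 s s' : 0 <= P s (sigma s) s'.
Proof. by case/andP: (P01 s (sigma s) s'). Qed.

Lemma av_ge0 n s : 0 <= av n s.
Proof.
elim: n s => [|n IH] s /=; case: (s \in T) => //.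
by apply: sumr_ge0 => s' _; apply: mulr_ge0; [exact: P0|exact: IH].
Qed.

Lemma av_le1 n s : av n s <= 1.
Proof.
elim: n s => [|n IH] s /=; case: (s \in T) => //.
rewrite -(Psum s); apply: ler_sum => s' _.
by rewrite -[leRHS]mulr1; apply: ler_wpM2l; [exact: P0|exact: IH].
Qed.

Lemma ht_ge0 n s : 0 <= ht n s.
Proof.
elim: n s => [|n IH] s /=; case: (s \in T) => //.
by apply: sumr_ge0 => s' _; apply: mulr_ge0; [exact: P0|exact: IH].
Qed.

Lemma st_ge0 n s : 0 <= st n s.
Proof.
elim: n s => [|n IH] s /=; case: (s \in T) => //.
by apply: sumr_ge0 => s' _; apply: mulr_ge0; [exact: P0|exact: IH].
Qed.

Lemma av_mono n s : av n.+1 s <= av n s.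
Proof.
elim: n s => [|n IH] s.
  rewrite /=; case: (s \in T) => //.
  rewrite -[leRHS](Psum s); apply: ler_sum => s' _.
  by rewrite -[leRHS]mulr1; apply: ler_wpM2l; [exact: P0|exact: (av_le1 0)].
rewrite [av n.+2 s]/= [av n.+1 s]/=; case: (s \in T) => //.
by apply: ler_sum => s' _; apply: ler_wpM2l; [exact: P0|exact: IH].
Qed.

Lemma av_monoD n k s : av (n + k) s <= av n s.
Proof.
elim: k => [|k IH]; first by rewrite addn0.
by rewrite addnS; apply: le_trans (av_mono _ _) IH.
Qed.

Lemma mass n s : \sum_(k < n.+1) ht k s + av n s = 1.
Proof.
elim: n s => [|n IH] s.
  by rewrite big_ord1 /=; case: (s \in T); rewrite ?addr0 ?add0r.
rewrite big_ord_recl /=.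
case: (boolP (s \in T)) => sT.
  by rewrite big1 ?addr0 // => i _; rewrite /= sT.
rewrite add0r.
rewrite exchange_big /= -big_split /= -[RHS](Psum s); apply: eq_bigr => s' _.
rewrite -mulr_sumr -mulrDr.
by rewrite IH mulr1.
Qed.


Variables (x : S -> \bar R) (r : S -> ninf).
Hypothesis x0 : forall s, (0 <= x s)%E.
Hypothesis HD : forall s, ninf_le (Dop P sigma T r s) (r s).
Hypothesis HE : forall s, (Eop P sigma T rew x s <= x s)%E.
Hypothesis Hxr : forall s, (x s < +oo)%E -> r s <> None.

Lemma closure s s' : (x s < +oo)%E -> s \notin T -> P s (sigma s) s' != 0 ->
  (x s' < +oo)%E.
Proof.
move=> xs sT Pne; have := HE s; rewrite /Eop (negbTE sT) => H.
rewrite ltey; apply/negP => /eqP xinf.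
have Ppos : 0 < P s (sigma s) s' by rewrite lt0r Pne P0.
have : ((P s (sigma s) s')%:E * x s' <= x s)%E.
  apply: le_trans H; apply: lee_paddl; first by rewrite lee_fin.
  rewrite (bigD1 s') //=; apply: lee_paddr => //.
  apply: sume_ge0 => s'' _; apply: mule_ge0 => //; rewrite lee_fin; exact: P0.
rewrite xinf mulry gtr0_sg // mul1e leye_eq => /eqP xsinf.
by move: xs; rewrite xsinf ltxx.
Qed.

Lemma bigmin_in (Q : pred S) :
  let v := \big[ninf_min/None]_(s' | Q s') r s' in
  v = None \/ exists s', Q s' /\ r s' = v.
Proof.
apply: (big_rec (fun v => v = None \/ exists s', Q s' /\ r s' = v)); first by left.
move=> s' v Qs' [->|[s'' [Qs'' <-]]].
  by right; exists s'; split => //; case: (r s').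
right; case E1: (r s') => [a|]; case E2: (r s'') => [b|] /=.
- case: (leqP a b) => ab.
    by exists s'; split => //; rewrite E1 (minn_idPl ab).
  by exists s''; split => //; rewrite E2 (minn_idPr (ltnW ab)).
- by exists s'; split => //; rewrite E1.
- by exists s''; split => //; rewrite E2.
- by exists s''; split => //; rewrite E2.
Qed.

Lemma descent s m : s \notin T -> r s = Some m ->
  exists s' k, [/\ P s (sigma s) s' != 0, r s' = Some k & (k < m)%N].
Proof.
move=> sT rs; have := HD s; rewrite /Dop (negbTE sT) rs.
case: (bigmin_in (fun s' => P s (sigma s) s' != 0)) => [->|[s' [Q1 E]]] //=.
rewrite -E; case E': (r s') => [k|] //= km.
by exists s', k.
Qed.

Variable delta : R.
Hypothesis delta_pos : 0 < delta.
Hypothesis delta_le1 : delta <= 1.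
Hypothesis delta_min : forall s s', P s (sigma s) s' != 0 -> delta <= P s (sigma s) s'.

Lemma av_inT n s : s \in T -> av n s = 0.
Proof. by case: n => [|n] /= ->. Qed.

Lemma claim m s : (x s < +oo)%E -> r s = Some m -> av m s <= 1 - delta ^+ m.
Proof.
have d0 : 0 <= delta by apply: ltW.
elim/ltn_ind: m s => m IH s xs rs.
case: (boolP (s \in T)) => sT.
  by rewrite av_inT // subr_ge0 exprn_ile1.
have [s' [k [Pne rs' km]]] := descent _ _ sT rs.
case: m km IH rs => [//|m] km IH rs.
have xs' := closure _ _ xs sT Pne.
have IHk := IH k km s' xs' rs'.
have a' : av m s' <= 1 - delta ^+ m.
  have := av_monoD k (m - k) s'; rewrite subnKC // => H.
  apply: le_trans H _; apply: le_trans IHk _.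
  by rewrite lerD2l lerN2; apply: ler_wiXn2l.
rewrite /= (negbTE sT) (bigD1 s') //=.
have Hrest : \sum_(i | i != s') P s (sigma s) i * av m i <= 1 - P s (sigma s) s'.
  have := Psum s; rewrite (bigD1 s') //= => Hs.
  have -> : 1 - P s (sigma s) s' = \sum_(i | i != s') P s (sigma s) i.
    by rewrite -Hs addrAC subrr add0r.
  apply: ler_sum => i _; rewrite -[leRHS]mulr1; apply: ler_wpM2l; [exact: P0|exact: av_le1].
have Pd := delta_min _ _ Pne.
have Hm : 0 <= delta ^+ m by apply: exprn_ge0.
have : delta * delta ^+ m <= P s (sigma s) s' * (1 - av m s').
  by apply: ler_pM => //; rewrite lerBrDl -lerBrDr.
rewrite exprS.
move: Hrest; set a := av m s'; set p := P s (sigma s) s'; set rest := \sum_(i | _) _.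
move=> H1 H2; nra.
Qed.


Lemma mult n b : (forall s, (x s < +oo)%E -> av n s <= b) ->
  forall k s, (x s < +oo)%E -> av (k + n) s <= b * av k s.
Proof.
move=> Hb; elim=> [|k IH] s xs.
  rewrite add0n; case: (boolP (s \in T)) => sT; first by rewrite !av_inT // mulr0.
  by rewrite [av 0 s]/= (negbTE sT) mulr1; exact: Hb.
rewrite addSn; case: (boolP (s \in T)) => sT; first by rewrite !av_inT // mulr0.
rewrite [av (k + n).+1 s]/= [av k.+1 s]/= (negbTE sT) mulr_sumr; apply: ler_sum => s' _.
case: (eqVneq (P s (sigma s) s') 0) => [->|Pne]; first by rewrite !mul0r mulr0.
rewrite mulrCA; apply: ler_wpM2l; first exact: P0.
exact: IH (closure _ _ xs sT Pne).
Qed.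

Lemma geo N q : (forall s, (x s < +oo)%E -> av N s <= q) -> 0 <= q ->
  forall j s, (x s < +oo)%E -> av (j * N) s <= q ^+ j.
Proof.
move=> HN q0; elim=> [|j IH] s xs; first by rewrite mul0n expr0 av_le1.
rewrite mulSn; apply: le_trans (mult _ _ IH N s xs) _.
by rewrite exprSr; apply: ler_wpM2l; [exact: exprn_ge0|exact: HN].
Qed.


Lemma av_cvg0 s : (x s < +oo)%E -> av n s @[n --> \oo] --> 0.
Proof.
move=> xs.
pose N := (\max_(s : S) odflt 0%N (r s))%N.
have HN : forall s, (x s < +oo)%E -> exists m, r s = Some m /\ (m <= N)%N.
  move=> s' xs'; case E: (r s') => [m|]; last by have := Hxr _ xs'; rewrite E.
  exists m; split => //; rewrite /N.
  by have := @leq_bigmax _ (fun s => odflt 0%N (r s)) s'; rewrite E.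
have d0 : 0 <= delta by apply: ltW.
pose q := 1 - delta ^+ N.
have Hq : forall s, (x s < +oo)%E -> av N s <= q.
  move=> s' xs'; have [m [rs' mN]] := HN s' xs'.
  have := av_monoD m (N - m) s'; rewrite subnKC // => H.
  apply: le_trans H _; apply: le_trans (claim _ _ xs' rs') _.
  by rewrite lerD2l lerN2; apply: ler_wiXn2l.
have q01 : 0 <= q < 1.
  rewrite /q subr_ge0 exprn_ile1 //= ltrBlDr ltrDl; exact: exprn_gt0.
apply: (@geo_cvg0 R (fun n => av n s) N q q01) => [n|n|j]; first exact: av_ge0.
  exact: av_mono.
have q0 : 0 <= q by case/andP: q01.
exact: (geo _ _ Hq q0 j s xs).
Qed.


Lemma reach1 s : (x s < +oo)%E -> reach_prob P sigma T s = 1%E.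
Proof.
move=> xs; rewrite /reach_prob.
rewrite (eq_eseriesr (g := fun n => (ht n s)%:E)); last by move=> n _; rewrite ht_eq.
apply: cvg_lim => //.
rewrite -cvg_shiftS /=.
have E : forall n, (\sum_(0 <= i < n.+1) (ht i s)%:E)%E = (1 - av n s)%:E.
  by move=> n; rewrite sumEFin big_mkord -(mass n s) addrK.
have -> : (fun n => (\sum_(0 <= i < n.+1) (ht i s)%:E)%E) = (fun n => (1 - av n s)%:E).
  by apply: funext => n; exact: E.
apply: cvg_EFin; first exact: nearW.
rewrite /comp /=.
rewrite -[X in _ --> X]subr0; apply: cvgB; first exact: cvg_cst.
exact: av_cvg0.
Qed.


Lemma st_inT n s : s \in T -> st n s = 0.
Proof. by case: n => [|n] /= ->. Qed.

Lemma partial_le n s : ((\sum_(k < n) st k s)%:E <= x s)%E.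
Proof.
elim: n s => [|n IH] s; first by rewrite big_ord0.
case: (boolP (s \in T)) => sT.
  by rewrite big1 // => i _; rewrite st_inT.
rewrite big_ord_recl [st 0 s]/= (negbTE sT).
have -> : \sum_(i < n) st (bump 0 i) s =
    \sum_(s' | P s (sigma s) s' != 0) P s (sigma s) s' * \sum_(i < n) st i s'.
  transitivity (\sum_(s' : S) P s (sigma s) s' * \sum_(i < n) st i s').
    transitivity (\sum_(i < n) \sum_(s' : S) P s (sigma s) s' * st i s').
      by apply: eq_bigr => i _; rewrite /= (negbTE sT).
    rewrite exchange_big /=; apply: eq_bigr => i _.
    by rewrite mulr_sumr.
  rewrite (bigID (fun s' => P s (sigma s) s' != 0)) /= [X in _ + X]big1 ?addr0 //.
  by move=> s' /negPn/eqP ->; rewrite mul0r.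
apply: le_trans (HE s); rewrite /Eop (negbTE sT) EFinD -sumEFin.
apply: leeD2l; apply: lee_sum => s' _; rewrite EFinM.
apply: lee_wpmul2l; [rewrite lee_fin; exact: P0|exact: IH].
Qed.

Lemma bound s : (x s < +oo)%E -> (exp_reward P sigma T rew s <= x s)%E.
Proof.
move=> xs; rewrite /exp_reward reach1 // eqxx.
rewrite (eq_eseriesr (g := fun n => (st n s)%:E)); last by move=> n _; rewrite st_eq.
apply: lime_le.
  by apply: is_cvg_nneseries => n _ _; rewrite lee_fin st_ge0.
apply: nearW => n; rewrite sumEFin big_mkord; exact: partial_le.
Qed.

End Aux.

Lemma seq_delta (R : realType) (l : seq R) :
  exists d, [/\ 0 < d, d <= 1 & forall y, y \in l -> 0 < y -> d <= y].
Proof.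
elim: l => [|y l [d [d0 d1 dl]]]; first by exists 1.
case: (ltP 0 y) => y0.
  exists (Order.min d y); split.
  - by rewrite lt_min d0 y0.
  - by rewrite ge_min d1.
  - move=> z; rewrite inE => /orP[/eqP ->|zl] z0; first by rewrite ge_min lexx orbT.
    by rewrite ge_min dl.
exists d; split => // z; rewrite inE => /orP[/eqP ->|zl] z0; last exact: dl.
by move: z0; rewrite ltNge y0.
Qed.

Lemma delta_ex (R : realType) (S A : finType) (P : S -> A -> S -> R) (sigma : S -> A) :
  (forall s a s', 0 <= P s a s') ->
  exists d, [/\ 0 < d, d <= 1 &
    forall s s', P s (sigma s) s' != 0 -> d <= P s (sigma s) s'].
Proof.
move=> P0.
have [d [d0 d1 dl]] := @seq_delta R [seq P s (sigma s) s' | s <- enum S, s' <- enum S].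
exists d; split => // s s' Pne; apply: dl.
  by apply: allpairs_f; rewrite mem_enum.
by rewrite lt0r Pne P0.
Qed.

Theorem proposition10 (R : realType) (S A : finType) (P : S -> A -> S -> R)
  (T : {set S}) (rew : S -> R) (x : S -> \bar R) (r : S -> ninf) (sigma : S -> A) :
  is_MDP P ->
  (forall s, 0 <= rew s) ->
  (forall s, (0 <= x s)%E) ->
  is_strategy P sigma ->
  (forall s, ninf_le (Dop P sigma T r s) (r s)) ->
  (forall s, (Eop P sigma T rew x s <= x s)%E) ->
  (forall s, (x s < +oo)%E -> r s <> None) ->
  forall s, (exp_reward_min P T rew s <= exp_reward P sigma T rew s)%E /\
            (exp_reward P sigma T rew s <= x s)%E.
Proof.
move=> [P01 _ _] rew0 x0 strat HD HE Hxr s.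
have Psum : forall s, \sum_(s' : S) P s (sigma s) s' = 1.
  by move=> s'; apply/eqP; exact: strat.
split.
  by apply: ereal_inf_lbound; exists sigma.
case: (boolP (x s < +oo)%E) => xs.
  have P0' : forall s a s', 0 <= P s a s' by move=> s1 a s2; case/andP: (P01 s1 a s2).
  have [d [d0 d1 dm]] := @delta_ex R S A P sigma P0'.
  exact: (@bound R S A P T rew sigma P01 Psum rew0 x r x0 HD HE Hxr d d0 d1 dm s xs).
by move: xs; rewrite ltey negbK => /eqP ->; exact: leey.
Qed.
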